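(* Let $b\ge 1$ be an integer and let $c\in\mathbb{R}$ be a fixed critical value (depending only on $b$, not on $l$). For each integer $l\ge 1$ let $D_1(l),\dots,D_b(l)$ be real random variables on a probability space with probability measure $\mathbb{P}$, where $\mathbb{P}$ is the distribution under which the null hypothesis $H_{0j}$ for the fixed candidate feature $f_j$ holds. Assume: (A1) almost surely, $D_i(l+1)\le D_i(l)$ for all $i\in\{1,\dots,b\}$ and all $l\ge 1$; (A2) almost surely, for every $l$, all $D_i(l)$ are nonzero and the absolute values $|D_1(l)|,\dots,|D_b(l)|$ are pairwise distinct. Let $T^+(l)=\sum_{i=1}^b R_i(l)\,\mathbf{1}\{D_i(l)>0\}$, where $R_i(l)$ is the rank of $|D_i(l)|$ among $\{|D_1(l)|,\dots,|D_b(l)|\}$ (rank $1$ for the smallest). Define the Type I error $\alpha_j(l)=\mathbb{P}\big(T^+(l)\ge c\big)$. Then for every $l\ge 1$, \[\alpha_j(l+1)\le \alpha_j(l).\]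
   Context: Setting: a response $Y$ and candidate features $f_1,\dots,f_p$; the data are augmented with $l$ synthetic noise features $\varepsilon_1,\dots,\varepsilon_l$ drawn i.i.d. from a fixed distribution. For bootstrap replicate $i=1,\dots,b$, $I^{(i)}_j(l)$ is the importance score of $f_j$ and $I^{(i)}(\varepsilon_k;l)$ that of the $k$-th noise feature when $l$ noise features are included; $M^{(i)}(l)=\max_{1\le k\le l} I^{(i)}(\varepsilon_k;l)$ and $D_i(l)=I^{(i)}_j(l)-M^{(i)}(l)$. $T^+(l)$ is the one-sided Wilcoxon signed-rank statistic computed from $\{D_i(l)\}_{i=1}^b$, and the test rejects $H_{0j}: Y\perp\!\!\!\perp f_j$ when $T^+(l)\ge c$, with $c=c_\alpha(b)$ the Wilcoxon critical value at level $\alpha$. *)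

(* Defs.v *)
From HB Require Import structures.
From mathcomp Require Import all_boot all_order all_algebra.
From mathcomp Require Import all_classical all_reals all_analysis.
Set Implicit Arguments. Unset Strict Implicit. Unset Printing Implicit Defensive.
Import Order.TTheory GRing.Theory Num.Theory.
Local Open Scope ring_scope.

(* Rank of |x i| among |x 0|, ..., |x (b-1)|: 1 + number of strictly smaller
   absolute values (rank 1 for the smallest; meaningful when all |x k| are
   pairwise distinct). *)
Definition abs_rank (R : realDomainType) (b : nat) (x : 'I_b -> R) (i : 'I_b) : nat :=
  (#|[set k : 'I_b | `|x k| < `|x i|]|).+1.

Definition Tplus (R : realDomainType) (b : nat) (x : 'I_b -> R) : nat :=
  \sum_(i < b) (if (0 < x i)%R then abs_rank x i else 0%N).

(* Main.v *)
Require Import Defs.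
From HB Require Import structures.
From mathcomp Require Import all_boot all_order all_algebra.
From mathcomp Require Import all_classical all_reals all_analysis.
From mathcomp Require Import lra zify measurable_realfun measurable_fun_approximation.
Import Order.TTheory GRing.Theory Num.Theory.
Local Open Scope classical_set_scope.
Local Open Scope ring_scope.

Section Comb.
Variable R : realType.

Lemma key_sign (a c : R) : `|c| < `|a| -> (0 < a + c) = (0 < a).
Proof.
have [ha|ha] := leP 0 a; have [hc|hc] := leP 0 c.
- rewrite (ger0_norm ha) (ger0_norm hc) => h.
  apply/idP/idP => _; lra.
- rewrite (ger0_norm ha) (ltr0_norm hc) => h.
  apply/idP/idP => _; lra.
- rewrite (ltr0_norm ha) (ger0_norm hc) => h.
  apply/idP/idP => H; lra.
- rewrite (ltr0_norm ha) (ltr0_norm hc) => h.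
  apply/idP/idP => H; lra.
Qed.

Definition gg (b : nat) (x : 'I_b -> R) (m k : 'I_b) : nat :=
  ((0 < x m) && (`|x k| < `|x m|))%R.

Arguments gg {b}.

Lemma pointwise (b : nat) (x : 'I_b -> R) :
  (forall i k : 'I_b, i != k -> `|x i| != `|x k|) ->
  forall m k, ((0 < x m + x k)%R : nat) =
    (gg x m k + gg x k m + ((m == k) && (0 < x m)%R))%N.
Proof.
move=> H m k; rewrite /gg.
have [->|mk] := eqVneq m k.
  rewrite ltxx !andbF /=.
  by have [h|h] := ltP 0 (x k); [have -> : 0 < x k + x k by lra|
    have -> : (0 < x k + x k) = false by apply/negbTE; rewrite -leNgt; lra].
have := H _ _ mk; rewrite neq_lt => /orP [h|h] /=.
- rewrite addrC (key_sign _ _ h) (_ : (`|x k| < `|x m|) = false);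
    last by apply/negbTE; rewrite -leNgt ltW.
  by rewrite h andbF andbT /= !addn0; case: (0 < x k).
- rewrite (key_sign _ _ h) (_ : (`|x m| < `|x k|) = false);
    last by apply/negbTE; rewrite -leNgt ltW.
  by rewrite h !andbF andbT /= !addn0; case: (0 < x m).
Qed.

Lemma Tplus_gg (b : nat) (x : 'I_b -> R) :
  Tplus x = (\sum_m (0 < x m)%R + \sum_m \sum_k gg x m k)%N.
Proof.
rewrite /Tplus -big_split /=; apply: eq_bigr => m _.
rewrite /abs_rank -sum1_card big_mkcond /=.
rewrite /gg; case: (0 < x m) => /=.
  rewrite add1n; congr S; apply: eq_bigr => k _; rewrite inE /=.
  by case: (`|x k| < `|x m|).
by rewrite big1.
Qed.

Lemma Tplus_double (b : nat) (x : 'I_b -> R) :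
  (forall i k : 'I_b, i != k -> `|x i| != `|x k|) ->
  (Tplus x).*2 = (\sum_m \sum_k ((0 < x m + x k)%R : nat) + \sum_m (0 < x m)%R)%N.
Proof.
move=> H; rewrite Tplus_gg.
have E : forall m : 'I_b, (\sum_k ((0 < x m + x k)%R : nat))%N
   = (\sum_k gg x m k + \sum_k gg x k m + (0 < x m)%R)%N.
  move=> m; rewrite (eq_bigr _ (fun k _ => pointwise _ _ H m k)) !big_split /=.
  congr (_ + _)%N.
  rewrite (bigD1 m) //= eqxx /= big1 ?addn0 // => k /negbTE.
  by rewrite eq_sym => ->.
rewrite (eq_bigr _ (fun m _ => E m)) !big_split /=.
have G : (\sum_(m < b) \sum_(k < b) gg x k m = \sum_(m < b) \sum_(k < b) gg x m k)%N.
  by rewrite exchange_big.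
rewrite G -addnn.
set A := (\sum_(m < b) _)%N; set B := (\sum_(m < b) \sum_(k < b) gg x m k)%N.
lia.
Qed.

Lemma Tplus_mono (b : nat) (x y : 'I_b -> R) :
  (forall i k : 'I_b, i != k -> `|x i| != `|x k|) ->
  (forall i k : 'I_b, i != k -> `|y i| != `|y k|) ->
  (forall i, y i <= x i) -> (Tplus y <= Tplus x)%N.
Proof.
move=> Hx Hy le; rewrite -leq_double (Tplus_double _ _ Hx) (Tplus_double _ _ Hy).
have bl : forall a c : R, a <= c -> (nat_of_bool (0 < a)%R <= nat_of_bool (0 < c)%R)%N.
  by move=> a c ac; case: (boolP (0 < a)) => // h; rewrite (lt_le_trans h ac).
apply: leq_add; apply: leq_sum => m _.
  by apply: leq_sum => k _; apply: bl; apply: lerD.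
exact: bl.
Qed.

Definition TR (b : nat) (x : 'I_b -> R) : R :=
  \sum_(m < b) (if 0 < x m then 1 + \sum_(k < b) (if `|x k| < `|x m| then 1 else 0) else 0).

Arguments TR {b}.

Lemma TR_Tplus (b : nat) (x : 'I_b -> R) : (Tplus x)%:R = TR x.
Proof.
rewrite /Tplus /TR natr_sum; apply: eq_bigr => m _.
case: (0 < x m) => //.
rewrite /abs_rank -sum1_card big_mkcond /= -addn1 natrD natr_sum addrC.
congr (_ + _); apply: eq_bigr => k _; rewrite inE.
by case: (`|x k| < `|x m|).
Qed.

End Comb.
Arguments TR {R b}.

Theorem proposition5p1 (d : measure_display) (T : measurableType d)
  (R : realType) (P : probability T R) (b : nat) (c : R)
  (D : nat -> 'I_b -> T -> R) :
  (1 <= b)%N ->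
  (forall l i, measurable_fun setT (D l i)) ->
  {ae P, forall w, forall (l : nat) (i : 'I_b), (1 <= l)%N -> D l.+1 i w <= D l i w} ->
  {ae P, forall w, forall l : nat, (1 <= l)%N ->
      (forall i : 'I_b, D l i w != 0) /\
      (forall i k : 'I_b, i != k -> `|D l i w| != `|D l k w|)} ->
  forall l : nat, (1 <= l)%N ->
    (P [set w | (c <= (Tplus (fun i => D l.+1 i w))%:R)%R] <=
     P [set w | (c <= (Tplus (fun i => D l i w))%:R)%R])%E.
Proof.
move=> _ mD [N1 [mN1 N10 sN1]] [N2 [mN2 N20 sN2]] l l1.
have mS : forall l0, measurable [set w | (c <= (Tplus (fun i => D l0 i w))%:R)%R].
  move=> l0.
  have mf : measurable_fun setT (fun w => c <= TR (fun i => D l0 i w)).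
    apply: measurable_fun_ler; first exact: measurable_cst.
    apply: measurable_sum => m; apply: measurable_fun_ifT.
    - apply: measurable_fun_ltr; [exact: measurable_cst| exact: mD].
    - apply: measurable_funD; first exact: measurable_cst.
      apply: measurable_sum => k; apply: measurable_fun_ifT.
      + by apply: measurable_fun_ltr; apply: measurableT_comp => //; apply: mD.
      + exact: measurable_cst.
      + exact: measurable_cst.
    - exact: measurable_cst.
  have := mf measurableT [set true] I; rewrite setTI.
  congr measurable; apply/seteqP; split => w /=; by rewrite TR_Tplus.
have mN : measurable (N1 `|` N2) by exact: measurableU.
apply: (le_trans (y := P ([set w | (c <= (Tplus (fun i => D l i w))%:R)%R] `|` (N1 `|` N2)))).
  apply: le_measure; rewrite ?inE //; first exact: measurableU.
  move=> w /= Hc.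
  have [wN|wN] := pselect ((N1 `|` N2) w); first by right.
  left.
  have h1 : forall (l0 : nat) (i : 'I_b), (1 <= l0)%N -> D l0.+1 i w <= D l0 i w.
    by apply: contrapT => nh; apply: wN; left; exact: sN1 nh.
  have h2 : forall l0 : nat, (1 <= l0)%N ->
      (forall i : 'I_b, D l0 i w != 0) /\
      (forall i k : 'I_b, i != k -> `|D l0 i w| != `|D l0 k w|).
    by apply: contrapT => nh; apply: wN; right; exact: sN2 nh.
  apply: (le_trans Hc); rewrite ler_nat; apply: Tplus_mono.
  - by case: (h2 l l1).
  - by case: (h2 l.+1 (leqW l1)).
  - by move=> i; exact: h1.
apply: (le_trans (measureU2 _ (mS l) mN)).
have PN : (P (N1 `|` N2)%classic <= 0)%E.
  have E1 : (P N1 + P N2 = 0)%E by rewrite N10 N20 adde0.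
  apply: (le_trans (measureU2 P mN1 mN2)); rewrite -E1; exact: lexx.
apply: le_trans; first exact: (leeD (lexx _) PN).
by rewrite adde0.
Qed.
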